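(* For every $b\in\mathbb N$, every $\mathfrak a\in I_K$ and every $m\in\mathbb Z$ one has \[ G^b(\mathfrak a,m,0)=\frac{N_{bD}(\mathfrak a,m)}{D}. \]
   Context: Let $K$ be a real quadratic number field whose discriminant $D$ is odd (so $D>1$, $D\equiv 1 \pmod 4$ and $D$ is squarefree). Let $\mathcal O_K$ be its ring of integers, $x\mapsto x'$ the nontrivial automorphism of $K$, $N(x)=xx'$ and $\mathrm{tr}(x)=x+x'$. Let $I_K$ be the group of nonzero fractional ideals of $K$. For $\mathfrak a\in I_K$ let $N(\mathfrak a)\in\mathbb Q_{>0}$ denote its absolute norm; it is multiplicative and $N(x\mathcal O_K)=|N(x)|$. Let $\mathfrak d=\sqrt D\,\mathcal O_K$ be the different. Put $e(x)=e^{2\pi i x}$. For $b\in\mathbb N$, $\mathfrak a\in I_K$ and $m\in\mathbb Z$ define \[ G^b(\mathfrak a,m,0)=\#\Big\{\lambda\in \mathfrak a\mathfrak d^{-1}/b\mathfrak a : \tfrac{N(\lambda)}{N(\mathfrak a)}\equiv -\tfrac{m}{D}\pmod{b\mathbb Z}\Big\}, \] where the congruence means that the difference of the two rational numbers lies in $b\mathbb Z$. Further define \[ R_b(\mathfrak a,m)=\Big\{\lambda\in\mathfrak a/b\mathfrak a : \tfrac{N(\lambda)}{N(\mathfrak a)}\equiv m\pmod b\Big\},\qquad N_b(\mathfrak a,m)=\#R_b(\mathfrak a,m) \] (for $\lambda\in\mathfrak a$ the number $N(\lambda)/N(\mathfrak a)$ is an integer whose class mod $b$ depends only on $\lambda$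 mod $b\mathfrak a$). *)

(* Defs.v *)
From HB Require Import structures.
From mathcomp Require Import all_boot all_order all_algebra.
From mathcomp Require Import finmap boolp classical_sets cardinality.
Set Implicit Arguments. Unset Strict Implicit. Unset Printing Implicit Defensive.
Import Order.TTheory GRing.Theory Num.Theory.
Local Open Scope ring_scope.
Local Open Scope classical_set_scope.

(* Elements of K = Q(sqrt D) are pairs (x, y) : rat * rat standing for
   x + y * sqrt D.  D is passed explicitly. *)
Definition qf := (rat * rat)%type.

Definition qadd (x y : qf) : qf := (x.1 + y.1, x.2 + y.2).
Definition qmul (D : nat) (x y : qf) : qf :=
  (x.1 * y.1 + D%:R * (x.2 * y.2), x.1 * y.2 + x.2 * y.1).
Definition qscale (r : rat) (x : qf) : qf := (r * x.1, r * x.2).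
Definition qconj (x : qf) : qf := (x.1, - x.2).
(* N(x) = x x' and tr(x) = x + x' *)
Definition qnorm (D : nat) (x : qf) : rat := x.1 ^+ 2 - D%:R * x.2 ^+ 2.
Definition qtr (x : qf) : rat := 2 * x.1.

(* Ring of integers for D = 1 mod 4 : Z[omega], omega = (1 + sqrt D)/2. *)
Definition OK (D : nat) : set qf :=
  [set z | exists u v : int, z = (u%:~R + v%:~R / 2, v%:~R / 2)].

Definition is_frac_ideal (D : nat) (A : set qf) : Prop :=
  [/\ A (0, 0),
      (forall x y, A x -> A y -> A (qadd x y)),
      (forall r x, OK D r -> A x -> A (qmul D r x)),
      (exists x, A x /\ x <> (0, 0)) &
      (exists d : nat, (0 < d)%N /\ forall x, A x -> OK D (qscale d%:R x))].

Definition ideal_mul (D : nat) (A B : set qf) : set qf :=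
  [set z | exists s : seq (qf * qf),
      (forall p, p \in s -> A p.1 /\ B p.2) /\
      z = foldr (fun p acc => qadd (qmul D p.1 p.2) acc) (0, 0) s].

Definition ideal_inv (D : nat) (A : set qf) : set qf :=
  [set x | forall y, A y -> OK D (qmul D x y)].

Definition different (D : nat) : set qf := [set qmul D (0, 1) y | y in OK D].

Definition iscale (n : nat) (A : set qf) : set qf := [set qscale n%:R x | x in A].

Definition coset (L : set qf) (x : qf) : set qf := [set qadd x y | y in L].

Definition count_mod (L1 L2 : set qf) (P : qf -> Prop) : nat :=
  (#|` fset_set (coset L2 @` [set x | L1 x /\ P x]) |)%fset.

Definition lindex (L1 L2 : set qf) : nat := count_mod L1 L2 (fun _ => True).

(* absolute norm N(A) = [O_K : A] = [O_K : O_K cap A] / [A : O_K cap A] *)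
Definition absnorm (D : nat) (A : set qf) : rat :=
  (lindex (OK D) (OK D `&` A))%:R / (lindex A (OK D `&` A))%:R.

Definition Gb (D b : nat) (A : set qf) (m : int) : nat :=
  count_mod (ideal_mul D A (ideal_inv D (different D))) (iscale b A)
    (fun l => exists k : int,
       qnorm D l / absnorm D A - (- (m%:~R / D%:R)) = b%:R * k%:~R).

Definition Nb (D b : nat) (A : set qf) (m : int) : nat :=
  count_mod A (iscale b A)
    (fun l => exists k : int, qnorm D l / absnorm D A - m%:~R = b%:R * k%:~R).

Definition squarefree (n : nat) : Prop :=
  forall p : nat, prime p -> ~ (p * p %| n)%N.

(* Main.v *)
Require Import Defs.
From HB Require Import structures.
From mathcomp Require Import all_boot all_order all_algebra.
From mathcomp Require Import finmap boolp classical_sets cardinality.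
From mathcomp Require Import ring lra zify.
Import Order.TTheory GRing.Theory Num.Theory.
Local Open Scope ring_scope.

Module Aux.
Set Implicit Arguments. Unset Strict Implicit. Unset Printing Implicit Defensive.
Local Open Scope classical_set_scope.

Definition qsub (x y : qf) : qf := (x.1 - y.1, x.2 - y.2).
Definition q0 : qf := (0, 0).
Definition grp (M : set qf) := M q0 /\ (forall x y, M x -> M y -> M (qsub x y)).

Lemma qsubxx x : qsub x x = q0.
Proof. by rewrite /qsub !subrr. Qed.

Lemma grp_add M x y : grp M -> M x -> M y -> M (qadd x y).
Proof.
move=> [M0 Ms] Mx My.
have := Ms _ _ Mx (Ms _ _ M0 My).
by rewrite /qsub /qadd /q0 /= !sub0r !opprK.
Qed.

Lemma coset_eq M x y : grp M -> M (qsub x y) -> coset M x = coset M y.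
Proof.
case=> M0 Ms Mxy; apply/seteqP; split=> z [w Mw <-].
  exists (qsub w (qsub y x)).
    apply: (Ms) => //; have := Ms _ _ M0 Mxy; congr M; rewrite /qsub /q0 /= !sub0r !opprB //.
  by rewrite /qadd /qsub /=; congr pair; ring.
exists (qsub w (qsub x y)); first exact: Ms _ _ Mw Mxy.
by rewrite /qadd /qsub /=; congr pair; ring.
Qed.

Lemma coset_eqE M x y : grp M -> coset M x = coset M y -> M (qsub x y).
Proof.
move=> [M0 Ms] E.
have : coset M x x by exists q0 => //; rewrite /qadd /q0 /= !addr0; case: (x).
rewrite E => -[w Mw <-].
have -> : qsub (qadd y w) y = w by case: w {Mw} => ? ?; rewrite /qsub /qadd /=; congr pair; ring.
done.
Qed.

Lemma G5 (F : finType) (T : choiceType) (F' : finType) (S : {set F})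
  (h1 : F -> F') (h2 : F -> T) :
  {in S &, forall f f', (h1 f == h1 f') = (h2 f == h2 f')} ->
  #|` [fset h2 f | f in S]%fset| = #|h1 @: S|.
Proof.
move=> hk.
pose r f := odflt f [pick f' in S | h1 f' == h1 f].
have rS f : f \in S -> r f \in S /\ h1 (r f) = h1 f.
  move=> Sf; rewrite /r; case: pickP => [f' /andP[Sf' /eqP] //|/(_ f)].
  by rewrite Sf eqxx.
have rE f f' : f \in S -> f' \in S -> h1 f = h1 f' -> r f = r f'.
  move=> Sf Sf' e; rewrite /r (@eq_pick _ _ (fun g => (g \in S) && (h1 g == h1 f'))).
    by case: pickP => //= /(_ f'); rewrite Sf' eqxx.
  by move=> g; rewrite e.
pose R := r @: S.
have h1R : h1 @: R = h1 @: S.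
  apply/setP=> y; apply/imsetP/imsetP => [[g /imsetP[f Sf ->] ->]|[f Sf ->]].
    by exists f => //; case: (rS f Sf).
  by exists (r f); [apply/imsetP; exists f | case: (rS f Sf)].
have injR : {in R &, injective h1}.
  move=> g g' /imsetP[f Sf ->] /imsetP[f' Sf' ->] e.
  have [_ e1] := rS f Sf; have [_ e2] := rS f' Sf'.
  by apply: rE => //; rewrite -e1 -e2.
have -> : [fset h2 f | f in S]%fset = [fset h2 f | f in R]%fset.
  apply/fsetP=> x; apply/imfsetP/imfsetP => /= [[f Sf ->]|[g /imsetP[f Sf ->] ->]].
    exists (r f); first by apply/imsetP; exists f.
    have [Sr e] := rS f Sf; apply/eqP; rewrite eq_sym -hk //; exact/eqP.
  have [Sr e] := rS f Sf; exists f => //; apply/eqP; rewrite -hk //; exact/eqP.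
rewrite card_in_imfset; last first.
  move=> g g' gR g'R e; apply: injR => //; apply/eqP.
  case/imsetP: gR => f Sf gE; case/imsetP: g'R => f' Sf' g'E.
  have [Sr _] := rS f Sf; have [Sr' _] := rS f' Sf'.
  by rewrite hk ?gE ?g'E // -gE -g'E e.
rewrite -h1R card_in_imset //.
by rewrite cardE.
Qed.

Lemma grp_sym M a b : grp M -> M (qsub a b) -> M (qsub b a).
Proof.
move=> [M0 Ms] h; have := Ms _ _ M0 h; congr M.
by rewrite /qsub /q0 /= !sub0r !opprB.
Qed.

Lemma grp_trans M a b c : grp M -> M (qsub a b) -> M (qsub b c) -> M (qsub a c).
Proof.
move=> gM h1 h2; have [_ Ms] := gM.
have := Ms _ _ h1 (grp_sym gM h2); congr M.
by rewrite /qsub /=; congr pair; ring.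
Qed.

Lemma grp_refl M a : grp M -> M (qsub a a).
Proof. by move=> [M0 _]; rewrite qsubxx. Qed.

Section Count.
Variables (F : finType) (phi : F -> qf) (L M : set qf) (P : qf -> Prop).
Definition Sset : {set F} := [set f | `[< L (phi f) /\ P (phi f) >]]%SET.
Definition blk (f : F) : {set F} := [set f' | `[< M (qsub (phi f') (phi f)) >]]%SET.

Lemma count_gen : grp M ->
  (forall x, L x -> exists f, M (qsub x (phi f))) ->
  (forall x y, L x -> M (qsub x y) -> L y /\ (P x <-> P y)) ->
  count_mod L M P = #|blk @: Sset|.
Proof.
move=> gM H1 H2; rewrite /count_mod.
have -> : coset M @` [set x | L x /\ P x] = [set` [fset coset M (phi f) | f in Sset]%fset].
  apply/seteqP; split.
    move=> C [x [Lx Px] <-].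
    have [f Mf] := H1 x Lx; have [Lf Pf] := H2 _ _ Lx Mf.
    rewrite /=; apply/imfsetP; exists f.
      by rewrite /= inE; apply/asboolP; split => //; apply/Pf.
    exact: coset_eq.
  move=> C /= /imfsetP [f /= Sf ->]; exists (phi f) => //.
  by move: Sf; rewrite inE => /asboolP.
rewrite set_fsetK; apply: G5 => f f' _ _.
apply/eqP/eqP => [e|e].
  have : f' \in blk f' by rewrite inE; apply/asboolP; exact: grp_refl.
  rewrite -e inE => /asboolP h; apply: coset_eq => //; exact: grp_sym.
have h := coset_eqE gM e.
apply/setP => g; rewrite !inE; apply/asboolP/asboolP => hg.
  exact: grp_trans hg h.
by apply: grp_trans hg (grp_sym gM h).
Qed.

Lemma G2 (S : {set F}) (h1 : F -> {set F}) k :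
  (forall f, f \in S -> #|[set f' in S | h1 f' == h1 f]%SET| = k) ->
  #|S| = (#|h1 @: S| * k)%N.
Proof.
move=> hk.
rewrite -sum1_card (partition_big_imset h1) /= -sum_nat_const.
apply: eq_bigr => j /imsetP [f Sf ->].
rewrite -(hk f Sf) sum1_card; by apply: eq_card => g; rewrite !inE.
Qed.
End Count.
Lemma valZpD n (x y : 'Z_n) : (1 < n)%N -> (x + y)%R = ((x + y) %% n)%N :> nat.
Proof. by move=> n1; rewrite /=; congr (_ %% _)%N; apply: Zp_cast. Qed.
Lemma valZp_lt n (x : 'Z_n) : (1 < n)%N -> (x < n)%N.
Proof. move=> n1; have := ltn_ord x; move: (x : nat) => k; by rewrite Zp_cast. Qed.
Lemma cardZ2 n1 n2 : (1 < n1)%N -> (1 < n2)%N -> #|{: 'Z_n1 * 'Z_n2}| = (n1 * n2)%N.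
Proof. by move=> h1 h2; rewrite card_prod !card_ord !Zp_cast. Qed.

Definition lc (i j : int) (e1 e2 : qf) : qf := qadd (qscale i%:~R e1) (qscale j%:~R e2).
Definition lat (e1 e2 : qf) : set qf := [set x | exists i j : int, x = lc i j e1 e2].
Definition det2 (e1 e2 : qf) : rat := e1.1 * e2.2 - e1.2 * e2.1.

Lemma lc_sub i j i' j' e1 e2 : qsub (lc i j e1 e2) (lc i' j' e1 e2) = lc (i - i') (j - j') e1 e2.
Proof. rewrite /lc /qsub /qadd /qscale /=; congr pair; rewrite !intrB; ring. Qed.

Lemma lc_add i j i' j' e1 e2 : qadd (lc i j e1 e2) (lc i' j' e1 e2) = lc (i + i') (j + j') e1 e2.
Proof. rewrite /lc /qadd /qscale /=; congr pair; rewrite !intrD; ring. Qed.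

Lemma lc00 e1 e2 : lc 0 0 e1 e2 = q0.
Proof. by rewrite /lc /qadd /qscale /q0 /= !mul0r addr0. Qed.

Lemma lat_grp e1 e2 : grp (lat e1 e2).
Proof.
split; first by exists 0, 0; rewrite lc00.
by move=> x y [i [j ->]] [i' [j' ->]]; rewrite lc_sub; exists (i - i'), (j - j').
Qed.

Lemma lc_scale i j (n1 n2 : nat) e1 e2 :
  lc (i * n1%:Z) (j * n2%:Z) e1 e2 = lc i j (qscale n1%:R e1) (qscale n2%:R e2).
Proof. rewrite /lc /qadd /qscale /=; congr pair; rewrite !intrM /=; ring. Qed.

Lemma lc_inj i j i' j' e1 e2 : det2 e1 e2 != 0 ->
  lc i j e1 e2 = lc i' j' e1 e2 -> i = i' /\ j = j'.
Proof.
move=> hd e.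
have : qsub (lc i j e1 e2) (lc i' j' e1 e2) = q0 by rewrite e qsubxx.
rewrite lc_sub /lc /qadd /qscale /q0 /=; case => h1 h2.
move: (i - i') (j - j') h1 h2 (subr0_eq (x:=i) (y:=i')) (subr0_eq (x:=j) (y:=j')) => u v h1 h2 hu hv.
have hu' : (u%:~R : rat) * det2 e1 e2 = 0.
  rewrite /det2; have -> : (u%:~R : rat) * (e1.1 * e2.2 - e1.2 * e2.1) =
     e2.2 * (u%:~R * e1.1 + v%:~R * e2.1) - e2.1 * (u%:~R * e1.2 + v%:~R * e2.2) by ring.
  by rewrite h1 h2; ring.
have hv' : (v%:~R : rat) * det2 e1 e2 = 0.
  rewrite /det2; have -> : (v%:~R : rat) * (e1.1 * e2.2 - e1.2 * e2.1) =
     e1.1 * (u%:~R * e1.2 + v%:~R * e2.2) - e1.2 * (u%:~R * e1.1 + v%:~R * e2.1) by ring.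
  by rewrite h1 h2; ring.
move/eqP: hu'; rewrite mulf_eq0 (negbTE hd) orbF intr_eq0 => /eqP /hu ->.
by move/eqP: hv'; rewrite mulf_eq0 (negbTE hd) orbF intr_eq0 => /eqP /hv ->.
Qed.

Section Coord.
Variables (e1 e2 : qf) (n1 n2 : nat).
Hypotheses (hn1 : (1 < n1)%N) (hn2 : (1 < n2)%N) (hdet : det2 e1 e2 != 0).
Definition phiL (f : 'Z_n1 * 'Z_n2) : qf := lc (f.1 : nat)%:Z (f.2 : nat)%:Z e1 e2.
Definition M0 := lat (qscale n1%:R e1) (qscale n2%:R e2).

Lemma M0P x : M0 x <-> exists k l : int, x = lc (k * n1%:Z) (l * n2%:Z) e1 e2.
Proof.
by split=> [[k [l ->]]|[k [l ->]]]; exists k, l; rewrite lc_scale.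
Qed.

Lemma M0_sub x : M0 x -> lat e1 e2 x.
Proof. by move/M0P=> [k [l ->]]; exists (k * n1%:Z), (l * n2%:Z). Qed.

Lemma M0_grp : grp M0.
Proof. exact: lat_grp. Qed.

Lemma phiL_lat f : lat e1 e2 (phiL f).
Proof. by exists (f.1 : nat)%:Z, (f.2 : nat)%:Z. Qed.

Lemma modz_absz (i : int) (n : nat) : (0 < n)%N -> ((absz (i %% n%:Z)%Z)%:Z = (i %% n%:Z)%Z) /\
   (absz (i %% n%:Z)%Z < n)%N.
Proof.
move=> n0; have h0 : 0 <= (i %% n%:Z)%Z by apply: modz_ge0; rewrite eqz_nat -lt0n.
have h1 : (i %% n%:Z)%Z < n%:Z by apply: ltz_pmod; rewrite ltz_nat.
split; first by rewrite gez0_abs.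
by rewrite -ltz_nat gez0_abs.
Qed.

Lemma phiL_surj x : lat e1 e2 x -> exists f, M0 (qsub x (phiL f)).
Proof.
move=> [i [j ->]].
have [a1 b1] := modz_absz i (ltnW hn1); have [a2 b2] := modz_absz j (ltnW hn2).
exists ((absz (i %% n1%:Z)%Z)%:R, (absz (j %% n2%:Z)%Z)%:R).
rewrite /phiL /= !val_Zp_nat // !modn_small // a1 a2 lc_sub.
apply/M0P; exists (i %/ n1%:Z)%Z, (j %/ n2%:Z)%Z.
by rewrite {1}(divz_eq i n1%:Z) {1}(divz_eq j n2%:Z) !addrK.
Qed.

Lemma phiL_inj f g : M0 (qsub (phiL f) (phiL g)) -> f = g.
Proof.
case: f g => [f1 f2] [g1 g2]; rewrite /phiL /= lc_sub => /M0P [k [l]].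
move=> /(lc_inj hdet) [h1 h2].
have lf1 := valZp_lt f1 hn1; have lg1 := valZp_lt g1 hn1.
have lf2 := valZp_lt f2 hn2; have lg2 := valZp_lt g2 hn2.
have key (a b c : nat) (m : int) : (a < c)%N -> (b < c)%N -> a%:Z - b%:Z = m * c%:Z -> a = b.
  move=> ha hb e; have : m = 0.
    case: (ltrgt0P m) => // hm; exfalso.
      have : c%:Z <= m * c%:Z by rewrite ler_peMl // ?gtz0_ge1 //.
      by rewrite -e; lia.
    have : m * c%:Z <= - c%:Z.
      by rewrite -mulN1r ler_wpM2r // -ltzD1 -addrC addrN; lia.
    by rewrite -e; lia.
  by move=> m0; move: e; rewrite m0 mul0r; lia.
congr pair; apply: val_inj => /=; [exact: key h1 | exact: key h2].
Qed.
Lemma phiL_add f g : M0 (qsub (phiL (f + g)) (qadd (phiL f) (phiL g))).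
Proof.
case: f g => [f1 f2] [g1 g2]; rewrite /phiL /= lc_add lc_sub.
move: (nat_of_ord f1) (nat_of_ord g1) (nat_of_ord f2) (nat_of_ord g2) => f1' g1' f2' g2'.
rewrite !Zp_cast //.
apply/M0P; exists (- ((f1' + g1') %/ n1)%N%:Z), (- ((f2' + g2') %/ n2)%N%:Z).
congr lc; [have := divn_eq (f1'+g1') n1 | have := divn_eq (f2'+g2') n2]; lia.
Qed.
End Coord.

Lemma qext (x y : qf) : x.1 = y.1 -> x.2 = y.2 -> x = y.
Proof. by case: x y => ? ? [? ?] /= -> ->. Qed.

Lemma blk_eqP (F : finType) (phi : F -> qf) (M : set qf) f f' : grp M ->
  (blk phi M f' == blk phi M f) <-> M (qsub (phi f') (phi f)).
Proof.
move=> gM; split => [/eqP e|h].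
  have : f' \in blk phi M f' by rewrite inE; apply/asboolP; exact: grp_refl.
  by rewrite e inE => /asboolP.
apply/eqP/setP => g; rewrite !inE; apply/asboolP/asboolP => hg.
  exact: grp_trans hg h.
by apply: grp_trans hg (grp_sym gM h).
Qed.

Lemma fiber_card n1 n2 (psi : 'Z_n1 * 'Z_n2 -> qf) (M : set qf) (S : {set 'Z_n1 * 'Z_n2}) :
  grp M ->
  (forall f g, M (qsub (psi (f + g)) (qadd (psi f) (psi g)))) ->
  (forall f g, f \in S -> M (qsub (psi g) (psi f)) -> g \in S) ->
  forall f, f \in S ->
  #|[set f' in S | blk psi M f' == blk psi M f]%SET| = #|[set k | `[< M (psi k) >]]%SET|.
Proof.
move=> gM hadd hS f Sf.
have [M0 Ms] := gM.
rewrite -[RHS](card_imset _ (addrI f)); apply: eq_card => g; rewrite !inE.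
apply/andP/imsetP => [[Sg /(blk_eqP _ _ _ gM) hg]|[k]].
  exists (g - f); last by rewrite addrC subrK.
  rewrite inE; apply/asboolP.
  have h1 := hadd f (g - f); rewrite addrC subrK in h1.
  have := Ms _ _ hg h1; congr M; apply: qext => /=; ring.
rewrite inE => /asboolP Mk ->.
have hf : M (qsub (psi (f + k)) (psi f)).
  have := grp_add gM (hadd f k) Mk; congr M; apply: qext => /=; ring.
split; first exact: hS hf.
exact/(blk_eqP _ _ _ gM).
Qed.
Section OK.
Variables (D k : nat).
Hypothesis hDk : D = (4 * k + 1)%N.

Lemma DR : (D%:R : rat) = 4 * k%:R + 1.
Proof. by rewrite hDk natrD natrM. Qed.

Lemma OKP z : OK D z <-> exists u v : int, z = (u%:~R + v%:~R / 2, v%:~R / 2).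
Proof. by []. Qed.

Lemma OK_add x y : OK D x -> OK D y -> OK D (qadd x y).
Proof.
move=> [u1 [v1 ->]] [u2 [v2 ->]]; exists (u1 + u2), (v1 + v2).
by rewrite /qadd /=; congr pair; rewrite !intrD; field.
Qed.

Lemma OK_opp x : OK D x -> OK D (- x.1, - x.2).
Proof.
move=> [u1 [v1 ->]]; exists (- u1), (- v1).
by rewrite /=; congr pair; rewrite !intrN; field.
Qed.

Lemma OK_mul x y : OK D x -> OK D y -> OK D (qmul D x y).
Proof.
move=> [u1 [v1 ->]] [u2 [v2 ->]].
exists (u1 * u2 + v1 * v2 * k%:Z), (u1 * v2 + u2 * v1 + v1 * v2).
by rewrite /qmul /= DR; congr pair; rewrite !(intrD, intrM) /= -?pmulrn; field.
Qed.

Lemma OK_int (u : int) : OK D (u%:~R, 0).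
Proof. by exists u, 0; rewrite /= mul0r addr0. Qed.

Lemma OK_sqrt : OK D (0, 1).
Proof. by exists (-1), 2; congr pair; rewrite /=; field. Qed.

Lemma OK_conj x : OK D x -> OK D (qconj x).
Proof.
move=> [u [v ->]]; exists (u + v), (- v).
by rewrite /qconj /=; congr pair; rewrite !(intrD, intrN); field.
Qed.

Lemma OK_rat r : OK D (r, 0) -> exists u : int, r = u%:~R.
Proof.
move=> [u [v []]] -> /esym /eqP; rewrite mulf_eq0 invr_eq0 orbF intr_eq0 => /eqP ->.
by exists u; rewrite mul0r addr0.
Qed.

(* trace of sqrt D * u is in D Z *)
Lemma OK_tr_sqrt u : OK D u -> exists t : int, u.2 * 2 = t%:~R.
Proof. by move=> [a [v ->]]; exists v => /=; field. Qed.

End OK.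

Lemma qmul_sub D s x y : qmul D s (qsub x y) = qsub (qmul D s x) (qmul D s y).
Proof. by apply: qext; rewrite /qmul /qsub /=; ring. Qed.
Lemma qmul_add D s x y : qmul D s (qadd x y) = qadd (qmul D s x) (qmul D s y).
Proof. by apply: qext; rewrite /qmul /qadd /=; ring. Qed.
Lemma qmulA D s t x : qmul D s (qmul D t x) = qmul D (qmul D s t) x.
Proof. by apply: qext; rewrite /qmul /=; ring. Qed.
Lemma qmulC D s x : qmul D s x = qmul D x s.
Proof. by apply: qext; rewrite /qmul /=; ring. Qed.
Lemma qmul1 D x : qmul D (1, 0) x = x.
Proof. by apply: qext; rewrite /qmul /=; ring. Qed.

Lemma CF D n1 n2 e1 e2 (hn1 : (1 < n1)%N) (hn2 : (1 < n2)%N) (hdet : det2 e1 e2 != 0)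
  (s : qf) (L M : set qf) (P : qf -> Prop) :
  grp M ->
  (forall z, M0 e1 e2 n1 n2 z -> M (qmul D s z)) ->
  (forall x, L x -> exists y, lat e1 e2 y /\ M (qsub x (qmul D s y))) ->
  (forall x y, L x -> M (qsub x y) -> L y /\ (P x <-> P y)) ->
  #|Sset (fun f => qmul D s (phiL e1 e2 (n1:=n1) (n2:=n2) f)) L P| =
   (count_mod L M P * #|[set f | `[< M (qmul D s (phiL e1 e2 (n1:=n1) (n2:=n2) f)) >]]%SET|)%N.
Proof.
move=> gM hM0 H1 H2.
set psi := fun f => qmul D s (phiL e1 e2 (n1:=n1) (n2:=n2) f).
have H1' : forall x, L x -> exists f, M (qsub x (psi f)).
  move=> x Lx; have [y [ly My]] := H1 x Lx.
  have [f Mf] := phiL_surj hn1 hn2 ly; exists f.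
  by apply: grp_trans My _ => //; rewrite -qmul_sub; apply: hM0.
rewrite (count_gen gM H1' H2).
apply: G2 => f Sf; apply: fiber_card => //.
- by move=> g h; rewrite /psi -qmul_add -qmul_sub; apply: hM0; apply: phiL_add.
- move=> g h; rewrite /Sset !inE ?asboolE => HS Mhg.
  have [Lg Pg] : L (psi g) /\ P (psi g) by move: HS; rewrite ?asboolE.
  have [Lh PP] := H2 _ _ Lg (grp_sym gM Mhg).
  suff : L (psi h) /\ P (psi h) by rewrite ?asboolE.
  by split; [exact: Lh | apply/PP].
Qed.

Lemma phiL0 e1 e2 n1 n2 : phiL e1 e2 (0 : 'Z_n1 * 'Z_n2) = q0.
Proof. by rewrite /phiL /= lc00. Qed.

Lemma K0_card D e1 e2 n1 n2 (hn1 : (1 < n1)%N) (hn2 : (1 < n2)%N) (hdet : det2 e1 e2 != 0) :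
  #|[set f | `[< M0 e1 e2 n1 n2 (qmul D (1, 0) (phiL e1 e2 (n1:=n1) (n2:=n2) f)) >]]%SET| = 1%N.
Proof.
rewrite -(cards1 (0 : 'Z_n1 * 'Z_n2)); apply: eq_card => f; rewrite !inE qmul1.
apply/asboolP/eqP => [h|->]; last by rewrite phiL0; exact: (lat_grp _ _).1.
apply: (phiL_inj hn1 hn2 hdet); rewrite phiL0.
by move: h; congr M0; apply: qext; rewrite /qsub /q0 /= !subr0.
Qed.

Lemma iscale_lat n e1 e2 : iscale n (lat e1 e2) = M0 e1 e2 n n.
Proof.
apply/seteqP; split => x.
  by move=> [y [i [j ->]] <-]; exists i, j; apply: qext; rewrite /lc /qadd /qscale /=; ring.
move=> [i [j ->]]; exists (lc i j e1 e2); first by exists i, j.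
by apply: qext; rewrite /lc /qadd /qscale /=; ring.
Qed.


Definition mulset D (s : qf) (X : set qf) := [set qmul D s x | x in X].

Section Main.
Variables (D k : nat).
Hypotheses (hDk : D = (4 * k + 1)%N) (hD1 : (1 < D)%N).
Variables (A : set qf) (E1 E2 : qf).
Hypotheses (hA : A = lat E1 E2) (hdet : det2 E1 E2 != 0).
Hypothesis hAmod : forall r x, OK D r -> A x -> A (qmul D r x).
Variable (NA : rat).
Hypothesis hN2 : forall x z, A x -> A z -> OK D (qscale NA^-1 (qmul D x (qconj z))).
Hypothesis hNA0 : NA != 0.
Variables (b : nat) (m : int).
Hypothesis hb : (0 < b)%N.

Let sq : qf := (0, 1).
Let isq : qf := (0, D%:R^-1).
Let bs : qf := (0, b%:R).

Lemma D0 : (D%:R : rat) != 0.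
Proof. by rewrite pnatr_eq0 -lt0n ltnW. Qed.
Lemma b0 : (b%:R : rat) != 0.
Proof. by rewrite pnatr_eq0 -lt0n. Qed.

Lemma isqK x : qmul D isq (qmul D sq x) = x.
Proof. by apply: qext; rewrite /qmul /=; field; exact: D0. Qed.
Lemma sqK x : qmul D sq (qmul D isq x) = x.
Proof. by apply: qext; rewrite /qmul /=; field; exact: D0. Qed.
Lemma sqsq x : qmul D sq (qmul D sq x) = qscale D%:R x.
Proof. by apply: qext; rewrite /qmul /qscale /=; ring. Qed.
Lemma bsE x : qmul D bs x = qscale b%:R (qmul D sq x).
Proof. by apply: qext; rewrite /qmul /qscale /=; ring. Qed.

Lemma A_grp : grp A.
Proof. by rewrite hA; exact: lat_grp. Qed.
Lemma A_sq x : A x -> A (qmul D sq x).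
Proof. by apply: hAmod; exact: OK_sqrt. Qed.
Lemma A_scale (n : nat) x : A x -> A (qscale n%:R x).
Proof.
move=> Ax; have := hAmod (OK_int D (n%:Z)) Ax; congr A.
by apply: qext; rewrite /qmul /qscale /= -pmulrn; ring.
Qed.

Lemma mulset_grp s : grp (mulset D s A).
Proof.
have [A0 As] := A_grp; split.
  by exists q0 => //; apply: qext; rewrite /qmul /q0 /=; ring.
move=> x y [a Aa <-] [a' Aa' <-]; exists (qsub a a'); first exact: As.
by rewrite qmul_sub.
Qed.

Lemma iscale_grp n : grp (iscale n A).
Proof. by rewrite hA iscale_lat; exact: lat_grp. Qed.

Definition Pn (l : qf) := exists t : int, qnorm D l / NA - m%:~R = (b * D)%:R * t%:~R.
Definition Pg (l : qf) := exists t : int, qnorm D l / NA - (- (m%:~R / D%:R)) = b%:R * t%:~R.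

Lemma KEY x z : A x -> A z -> exists t : int,
  qnorm D (qadd x (qmul D bs z)) / NA = qnorm D x / NA + (b * D)%:R * t%:~R.
Proof.
move=> Ax Az.
have [t1 ht1] := OK_tr_sqrt (hN2 Ax Az).
have hv : OK D (qnorm D z / NA, 0).
  have := hN2 Az Az; congr (OK D); apply: qext; rewrite /qscale /qmul /qconj /qnorm /=.
    by field.
  by ring.
have [t2 ht2] := OK_rat hv.
exists (- t1 - b%:Z * t2).
rewrite intrB intrN intrM -ht1 -ht2 /= /qnorm /qadd /qmul /qconj /bs /=.
rewrite -[(b%:Z)%:~R]pmulrn natrM.
by field.
Qed.

Lemma Pn_inv x z : A x -> A z -> (Pn x <-> Pn (qadd x (qmul D bs z))).
Proof.
move=> Ax Az; have [t0 ht0] := KEY Ax Az; rewrite /Pn ht0.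
split=> [[t ht]|[t ht]].
  by exists (t + t0); rewrite intrD; lra.
by exists (t - t0); rewrite intrB; lra.
Qed.

Lemma qnorm_isq a : qnorm D (qmul D isq a) = - qnorm D a / D%:R.
Proof. by rewrite /qnorm /qmul /=; field; exact: D0. Qed.

Lemma Pg_iff a : Pg (qmul D isq a) <-> Pn a.
Proof.
rewrite /Pg /Pn qnorm_isq; have hD := D0.
split=> [[t ht]|[t ht]]; exists (- t); rewrite intrN ?natrM.
  have -> : qnorm D a / NA - m%:~R = - D%:R * (- qnorm D a / D%:R / NA - - (m%:~R / D%:R)).
    by field; rewrite hD hNA0.
  by rewrite ht; ring.
have -> : - qnorm D a / D%:R / NA - - (m%:~R / D%:R) = - D%:R^-1 * (qnorm D a / NA - m%:~R).
  by field; rewrite hNA0 hD.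
by rewrite ht natrM; field.
Qed.

Lemma inv_diff : ideal_inv D (different D) = [set x | OK D (qmul D sq x)].
Proof.
apply/seteqP; split => x /= hx.
  have h1 : different D (qmul D sq (1, 0)).
    exists (1, 0); last by [].
    by have := OK_int D 1; congr (OK D); apply: qext.
  have := hx _ h1.
  by congr (OK D); apply: qext; rewrite /qmul /=; ring.
move=> y [o Oo <-].
have := OK_mul hDk hx Oo; congr (OK D); apply: qext; rewrite /qmul /=; ring.
Qed.

Lemma Aq_eq : ideal_mul D A (ideal_inv D (different D)) = mulset D isq A.
Proof.
rewrite inv_diff; apply/seteqP; split => z.
  move=> [s [hs ->]]; elim: s hs => [|p s IH] hs /=.
    by exists q0; [exact: A_grp.1 | apply: qext; rewrite /qmul /q0 /=; ring].
  apply: grp_add; first exact: mulset_grp.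
    have [Ap1 Ip2] := hs p (mem_head _ _).
    exists (qmul D (qmul D sq p.2) p.1); first exact: hAmod.
    by apply: qext; rewrite /qmul /=; field; exact: D0.
  by apply: IH => q qs; apply: hs; rewrite in_cons qs orbT.
move=> [a Aa <-]; exists [:: (a, isq)]; split.
  move=> p; rewrite mem_seq1 => /eqP -> /=; split => //.
  by have := OK_int D 1; congr (OK D); apply: qext; rewrite /qmul /=; [field; exact: D0 | ring].
by apply: qext; rewrite /qmul /qadd /=; ring.
Qed.

Lemma sub_qsub L x y : grp L -> L x -> L (qsub x y) -> L y.
Proof.
move=> [L0 Ls] Lx Lxy; have := Ls _ _ Lx Lxy; congr L.
by apply: qext; rewrite /qsub /=; ring.
Qed.

Lemma H2_true (L M : set qf) : grp L -> (forall z, M z -> L z) ->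
  forall x y, L x -> M (qsub x y) -> L y /\ (True <-> True).
Proof. by move=> gL hML x y Lx Mxy; split => //; apply: sub_qsub gL Lx (hML _ Mxy). Qed.

Lemma iscaleP n y : iscale n A y <-> exists2 a, A a & y = qscale n%:R a.
Proof. by split => [[a Aa <-]|[a Aa ->]]; exists a. Qed.

Lemma mulsetP s y : mulset D s A y <-> exists2 a, A a & y = qmul D s a.
Proof. by split => [[a Aa <-]|[a Aa ->]]; exists a. Qed.

Lemma e2 y : iscale b A (qmul D isq y) <-> mulset D bs A y.
Proof.
rewrite iscaleP mulsetP; split => [[a Aa e]|[a Aa ->]]; exists a => //.
  by rewrite -[y]sqK e bsE; apply: qext; rewrite /qmul /qscale /=; ring.
by rewrite bsE; apply: qext; rewrite /qmul /qscale /=; field; exact: D0.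
Qed.

Lemma e3 (c : nat) y : (0 < c)%N ->
  iscale (c * D) A (qmul D (0, c%:R) y) <-> mulset D sq A y.
Proof.
move=> c0; have hc : (c%:R : rat) != 0 by rewrite pnatr_eq0 -lt0n.
rewrite iscaleP mulsetP; split => [[a Aa e]|[a Aa ->]]; exists a => //.
  move: e; rewrite /qmul /qscale /= natrM => -[h1 h2]; apply: qext => /=.
    have -> : y.1 = (0 * y.2 + c%:R * y.1) / c%:R by field.
    by rewrite h2; field.
  have -> : y.2 = (0 * y.1 + D%:R * (c%:R * y.2)) / (c%:R * D%:R) by field; rewrite hc D0.
  by rewrite h1; field; rewrite hc D0.
by apply: qext; rewrite /qmul /qscale /= natrM; ring.
Qed.


Lemma A_lat x : A x -> lat E1 E2 x.
Proof. by rewrite hA. Qed.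

Lemma M0_iscale n z : M0 E1 E2 n n z -> exists2 a, A a & z = qscale n%:R a.
Proof. by rewrite -iscale_lat -hA => /iscaleP. Qed.

Lemma qscaleM (r r' : rat) x : qscale r (qscale r' x) = qscale (r * r') x.
Proof. by apply: qext; rewrite /qscale /=; ring. Qed.

Lemma A_bs a : A a -> A (qmul D bs a).
Proof. by move=> Aa; rewrite bsE; apply: A_scale; exact: A_sq. Qed.

Lemma sqA_grp : grp (mulset D sq A). Proof. exact: mulset_grp. Qed.
Lemma bsA_grp : grp (mulset D bs A). Proof. exact: mulset_grp. Qed.

Lemma iscale_sub_bs z : iscale (b * D) A z -> mulset D bs A z.
Proof.
move/iscaleP=> [a Aa ->]; apply/mulsetP; exists (qmul D sq a); first exact: A_sq.
by rewrite bsE sqsq qscaleM natrM.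
Qed.

Lemma iscale_sub_sq z : iscale D A z -> mulset D sq A z.
Proof.
move/iscaleP=> [a Aa ->]; apply/mulsetP; exists (qmul D sq a); first exact: A_sq.
by rewrite sqsq.
Qed.

Lemma bsA_A z : mulset D bs A z -> A z.
Proof. by move/mulsetP=> [a Aa ->]; exact: A_bs. Qed.
Lemma sqA_A z : mulset D sq A z -> A z.
Proof. by move/mulsetP=> [a Aa ->]; exact: A_sq. Qed.

Definition K3 := Sset (fun f => qmul D (1, 0) (phiL E1 E2 (n1:=D) (n2:=D) f)) (mulset D sq A) (fun _ => True).

Lemma iscale_M0 n : iscale n A = M0 E1 E2 n n.
Proof. by rewrite hA iscale_lat. Qed.

Lemma phiA n1 n2 (f : 'Z_n1 * 'Z_n2) : A (phiL E1 E2 f).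
Proof. by rewrite hA; exact: phiL_lat. Qed.

Lemma H1_id (L M : set qf) : grp M -> (forall x, L x -> A x) ->
  forall x, L x -> exists y, lat E1 E2 y /\ M (qsub x (qmul D (1, 0) y)).
Proof.
move=> gM hLA x Lx; exists x; split; first by rewrite -hA; exact: hLA.
by rewrite qmul1 qsubxx; exact: gM.1.
Qed.

Lemma H1_mul (s : qf) (M : set qf) : grp M ->
  forall x, mulset D s A x -> exists y, lat E1 E2 y /\ M (qsub x (qmul D s y)).
Proof.
move=> gM x /mulsetP [a Aa ->]; exists a; split; first by rewrite -hA.
by rewrite qsubxx; exact: gM.1.
Qed.

Lemma hM0_id n z : M0 E1 E2 n n z -> iscale n A (qmul D (1, 0) z).
Proof. by rewrite qmul1 iscale_M0. Qed.

Lemma hM0_sq z : M0 E1 E2 D D z -> iscale D A (qmul D sq z).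
Proof.
move/M0_iscale=> [a Aa ->]; apply/iscaleP; exists (qmul D sq a); first exact: A_sq.
by apply: qext; rewrite /qmul /qscale /=; ring.
Qed.

Lemma K3_card : #|K3| = D.
Proof.
have hY := CF (D := D) hD1 hD1 hdet (s := (1, 0)) (L := mulset D sq A) (M := iscale D A)
  (P := fun _ => True) (iscale_grp D) (@hM0_id D) (H1_id (iscale_grp D) sqA_A)
  (H2_true sqA_grp iscale_sub_sq).
rewrite -/K3 iscale_M0 K0_card // muln1 in hY.
have hZ := CF (D := D) hD1 hD1 hdet (s := sq) (L := mulset D sq A) (M := iscale D A)
  (P := fun _ => True) (iscale_grp D) hM0_sq (H1_mul (s := sq) (iscale_grp D))
  (H2_true sqA_grp iscale_sub_sq).
have hT : Sset (fun f => qmul D sq (phiL E1 E2 (n1:=D) (n2:=D) f)) (mulset D sq A) (fun _ => True) = [set: 'Z_D * 'Z_D]%SET.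
  apply/setP => f; rewrite !inE; apply/asboolP; split => //.
  by apply/mulsetP; exists (phiL E1 E2 f) => //; exact: phiA.
have hK : [set f | `[< iscale D A (qmul D sq (phiL E1 E2 (n1:=D) (n2:=D) f)) >]]%SET = K3.
  apply/setP => f; rewrite !inE qmul1; apply/asboolP/asboolP.
    move=> h; split => //; apply/(e3 (c := 1)) => //.
    by move: h; rewrite mul1n; congr (iscale D A); apply: qext.
  by move=> [h _]; move/(e3 (c := 1)): h => // /(_ isT); rewrite mul1n; congr (iscale D A); apply: qext.
rewrite -iscale_M0 in hY; rewrite hT hK cardsT cardZ2 // -hY in hZ.
apply/eqP; rewrite -(eqn_pmul2l (m := #|K3|)); last first.
  by rewrite lt0n; apply/eqP => h; move: hZ; rewrite h muln0 => /eqP; rewrite muln_eq0 orbb; case: (D) hD1.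
by rewrite -hZ; apply/eqP; nia.
Qed.


Lemma hM0_bs z : M0 E1 E2 D D z -> iscale (b * D) A (qmul D bs z).
Proof.
move/M0_iscale=> [a Aa ->]; apply/iscaleP; exists (qmul D sq a); first exact: A_sq.
by apply: qext; rewrite /qmul /qscale /= natrM; ring.
Qed.

Definition Xc := count_mod (mulset D bs A) (iscale (b * D) A) (fun _ => True).

Lemma Xc_val : Xc = D.
Proof.
have hZ := CF (D := D) hD1 hD1 hdet (s := bs) (L := mulset D bs A) (M := iscale (b * D) A)
  (P := fun _ => True) (iscale_grp (b * D)) hM0_bs (H1_mul (s := bs) (iscale_grp (b * D)))
  (H2_true bsA_grp iscale_sub_bs).
have hT : Sset (fun f => qmul D bs (phiL E1 E2 (n1:=D) (n2:=D) f)) (mulset D bs A) (fun _ => True) = [set: 'Z_D * 'Z_D]%SET.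
  apply/setP => f; rewrite !inE; apply/asboolP; split => //.
  by apply/mulsetP; exists (phiL E1 E2 f) => //; exact: phiA.
have hK : [set f | `[< iscale (b * D) A (qmul D bs (phiL E1 E2 (n1:=D) (n2:=D) f)) >]]%SET = K3.
  apply/setP => f; rewrite !inE qmul1; apply/asboolP/asboolP.
    by move=> h; split => //; apply/(e3 (c := b)).
  by move=> [h _]; apply/(e3 (c := b)).
rewrite hT hK cardsT cardZ2 // K3_card -/Xc in hZ.
apply/eqP; rewrite -(eqn_pmul2r (m := D)) ?(ltnW hD1) //.
by rewrite -hZ.
Qed.

Lemma hn : (1 < b * D)%N.
Proof. by apply: leq_trans hD1 _; rewrite leq_pmull. Qed.

Lemma hM0_isq z : M0 E1 E2 (b * D) (b * D) z -> iscale b A (qmul D isq z).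
Proof.
move/M0_iscale=> [a Aa ->]; apply/iscaleP; exists (qmul D sq a); first exact: A_sq.
by apply: qext; rewrite /qmul /qscale /= natrM; field; exact: D0.
Qed.

Lemma H2n x y : A x -> iscale (b * D) A (qsub x y) -> A y /\ (Pn x <-> Pn y).
Proof.
move=> Ax /iscaleP [a Aa e]; split.
  by apply: sub_qsub A_grp Ax _; rewrite e; apply: A_scale.
have Az : A (qsub q0 (qmul D sq a)) by apply: A_grp.2; [exact: A_grp.1 | exact: A_sq].
have -> : y = qadd x (qmul D bs (qsub q0 (qmul D sq a))).
  move: e; rewrite /qsub /qadd /qmul /qscale /q0 natrM => -[e1 e2].
  apply: qext => /=; lra.
exact: Pn_inv.
Qed.

Lemma H2g x y : mulset D isq A x -> iscale b A (qsub x y) ->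
  mulset D isq A y /\ (Pg x <-> Pg y).
Proof.
move=> /mulsetP [a0 Aa0 ->] /iscaleP [a Aa e].
have Aa2 : A (qsub a0 (qmul D bs a)) by apply: A_grp.2 => //; exact: A_bs.
have ey : y = qmul D isq (qsub a0 (qmul D bs a)).
  move: e; rewrite /qsub /qadd /qmul /qscale /q0 => -[e1 e2].
  apply: qext => /=; rewrite -?e1 -?e2; field; exact: D0.
split; first by apply/mulsetP; exists (qsub a0 (qmul D bs a)).
rewrite ey !Pg_iff (Pn_inv Aa2 Aa).
by have -> : qadd (qsub a0 (qmul D bs a)) (qmul D bs a) = a0 by apply: qext; rewrite /qadd /qsub /=; ring.
Qed.

Lemma main_count :
  (count_mod (mulset D isq A) (iscale b A) Pg * D)%N = count_mod A (iscale (b * D) A) Pn.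
Proof.
have hn1 := hn.
have h1 := CF (D := D) hn1 hn1 hdet (s := (1, 0)) (L := A) (M := iscale (b * D) A)
  (P := Pn) (iscale_grp (b * D)) (@hM0_id (b * D)) (H1_id (iscale_grp (b * D)) (fun x h => h))
  H2n.
rewrite iscale_M0 K0_card // muln1 -iscale_M0 in h1.
have h3 := CF (D := D) hn1 hn1 hdet (s := (1, 0)) (L := mulset D bs A) (M := iscale (b * D) A)
  (P := fun _ => True) (iscale_grp (b * D)) (@hM0_id (b * D)) (H1_id (iscale_grp (b * D)) bsA_A)
  (H2_true bsA_grp iscale_sub_bs).
rewrite iscale_M0 K0_card // muln1 -iscale_M0 -/Xc Xc_val in h3.
have h2 := CF (D := D) hn1 hn1 hdet (s := isq) (L := mulset D isq A) (M := iscale b A)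
  (P := Pg) (iscale_grp b) hM0_isq (H1_mul (s := isq) (iscale_grp b)) H2g.
have hS : Sset (fun f => qmul D isq (phiL E1 E2 (n1:=b * D) (n2:=b * D) f)) (mulset D isq A) Pg =
   Sset (fun f => qmul D (1, 0) (phiL E1 E2 (n1:=b * D) (n2:=b * D) f)) A Pn.
  apply/setP => f; rewrite !inE qmul1; apply/asboolP/asboolP => [[_ h]|[_ h]].
    by split; [exact: phiA | exact/Pg_iff].
  by split; [apply/mulsetP; exists (phiL E1 E2 f) => //; exact: phiA | exact/Pg_iff].
have hK : [set f | `[< iscale b A (qmul D isq (phiL E1 E2 (n1:=b * D) (n2:=b * D) f)) >]]%SET =
   Sset (fun f => qmul D (1, 0) (phiL E1 E2 (n1:=b * D) (n2:=b * D) f)) (mulset D bs A) (fun _ => True).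
  apply/setP => f; rewrite !inE qmul1; apply/asboolP/asboolP => [h|[h _]].
    by split => //; apply/e2.
  exact/e2.
rewrite hS hK h3 h1 in h2.
by rewrite h2.
Qed.
End Main.


Definition ew (u v : int) : qf := (u%:~R + v%:~R / 2, v%:~R / 2).

Section Struct.
Variables (D k : nat).
Hypothesis hDk : D = (4 * k + 1)%N.
Hypothesis hnsq : forall u v : int, u * u + u * v - k%:Z * v * v = 0 -> u = 0 /\ v = 0.
Variables (A : set qf) (d : nat).
Hypothesis hd : (0 < d)%N.
Hypothesis A0 : A (0, 0).
Hypothesis Aadd : forall x y, A x -> A y -> A (qadd x y).
Hypothesis Amod : forall r x, OK D r -> A x -> A (qmul D r x).
Hypothesis Anz : exists x, A x /\ x <> (0, 0).
Hypothesis Ad : forall x, A x -> OK D (qscale d%:R x).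

Definition Sv (u v : int) := A (qscale (d%:R)^-1 (ew u v)).

Lemma d0 : (d%:R : rat) != 0.
Proof. by rewrite pnatr_eq0 -lt0n. Qed.

Lemma S_mul r u v : OK D r -> Sv u v -> A (qscale (d%:R)^-1 (qmul D r (ew u v))).
Proof.
move=> Or Suv; have := Amod Or Suv; congr A.
by apply: qext; rewrite /qmul /qscale /=; ring.
Qed.

Lemma S_add u v u' v' : Sv u v -> Sv u' v' -> Sv (u + u') (v + v').
Proof.
move=> h h'; have := Aadd h h'; congr A.
apply: qext; rewrite /qadd /qscale /ew /= !intrD.
all: ring.
Qed.

Lemma S_zmul t u v : Sv u v -> Sv (t * u) (t * v).
Proof.
move=> h; have := S_mul (OK_int D t) h; congr A.
by apply: qext; rewrite /qmul /qscale /ew /= !intrM; ring.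
Qed.

Lemma S_omega u v : Sv u v -> Sv (v * k%:Z) (u + v).
Proof.
move=> h; have hO : OK D (1/2, 1/2) by exists 0, 1; apply: qext => /=; field.
have := S_mul hO h; congr A.
apply: qext; rewrite /qmul /qscale /ew /=.
  rewrite hDk natrD natrM !intrD !intrM -?pmulrn /=.
  by congr (_ * _); field.
by rewrite !intrD; congr (_ * _); field.
Qed.

Lemma S_norm u v : Sv u v -> Sv (u * u + u * v - k%:Z * v * v) 0.
Proof.
move=> h; have hO : OK D (qconj (ew u v)) by apply: OK_conj; exists u, v.
have := S_mul hO h; congr A.
by apply: qext; rewrite /qmul /qscale /ew /qconj /= ?hDk ?natrD ?natrM ?(intrD, intrB, intrM) -?pmulrn /=;
  congr (_ * _); field.
Qed.

Lemma A_S x : A x -> exists u v, x = qscale (d%:R)^-1 (ew u v) /\ Sv u v.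
Proof.
move=> Ax; have [u [v e]] := Ad Ax; exists u, v.
have ex : x = qscale (d%:R)^-1 (ew u v).
  rewrite /ew -e; apply: qext; rewrite /qscale /=; field; exact: d0.
by split => //; rewrite /Sv -ex.
Qed.


Lemma min_exists (Q : int -> Prop) : (exists x : int, x != 0 /\ Q x) -> (forall x, Q x -> Q (- x)) ->
  exists g : nat, [/\ (0 < g)%N, Q g%:Z & forall n : nat, (0 < n)%N -> Q n%:Z -> (g <= n)%N].
Proof.
move=> [x [x0 Qx]] QN.
have ex : exists n : nat, (0 < n)%N && `[< Q n%:Z >].
  exists `|x|%N; rewrite absz_gt0 x0 /=; apply/asboolP.
  case: (ltrgt0P x) => hx.
  - by rewrite gtz0_abs.
  - by rewrite ltz0_abs //; apply: QN.
  - by move: x0; rewrite hx.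
case: (ex_minnP ex) => g /andP [g0 /asboolP Qg] gmin.
exists g; split => // n n0 Qn; apply: gmin; rewrite n0; exact/asboolP.
Qed.

Lemma min_div (Q : int -> Prop) (g : nat) : (0 < g)%N -> Q g%:Z ->
  (forall n : nat, (0 < n)%N -> Q n%:Z -> (g <= n)%N) ->
  (forall x y t, Q x -> Q y -> Q (x + t * y)) -> forall x, Q x -> (g%:Z %| x)%Z.
Proof.
move=> g0 Qg gmin Qc x Qx.
have gz : g%:Z != 0 by rewrite eqz_nat -lt0n.
have hr := Qc _ _ (- (x %/ g%:Z)%Z) Qx Qg.
have er : x + - (x %/ g%:Z)%Z * g%:Z = (x %% g%:Z)%Z by rewrite {1}(divz_eq x g%:Z); ring.
rewrite er in hr.
apply/dvdz_mod0P; apply/eqP; apply: contraT => r0.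
have r_ge0 : 0 <= (x %% g%:Z)%Z by apply: modz_ge0.
have r_lt : (x %% g%:Z)%Z < g%:Z by apply: ltz_pmod; rewrite ltz_nat.
have h1 : (0 < `|(x %% g%:Z)%Z|)%N by rewrite absz_gt0.
have h2 := gmin _ h1 (ltac:(by rewrite gez0_abs)).
by move: h2; rewrite -lez_nat gez0_abs // => h2; lia.
Qed.

Lemma structure : exists (g a : nat) (c : int),
  [/\ (0 < g)%N, (0 < a)%N, (exists t : int, c * c + c - k%:Z = t * a%:Z) &
   A = lat (qscale (g%:R / d%:R) (a%:R, 0)) (qscale (g%:R / d%:R) (c%:~R + 1/2, 1/2))].
Proof.
pose Q1 v := exists u, Sv u v.
have Q1N v : Q1 v -> Q1 (- v).
  by move=> [u Su]; exists (- u); have := S_zmul (-1) Su; rewrite !mulN1r.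
have Q1nz : exists v, v != 0 /\ Q1 v.
  have [x [Ax x0]] := Anz; have [u [v [ex Suv]]] := A_S Ax.
  case: (eqVneq v 0) => [v0|v0]; last by exists v; split => //; exists u.
  case: (eqVneq u 0) => [u0|u0].
    by exfalso; apply: x0; rewrite ex u0 v0; apply: qext; rewrite /qscale /ew /=; ring.
  exists u; split => //; exists (0 * k%:Z); have := S_omega Suv; by rewrite v0 addr0.
have [g [g0 [u0 Su0] gmin]] := min_exists Q1nz Q1N.
have Q1c x y t : Q1 x -> Q1 y -> Q1 (x + t * y).
  by move=> [u Su] [u' Su']; exists (u + t * u'); exact: S_add Su (S_zmul t Su').
have gdiv := min_div g0 (ex_intro _ u0 Su0) gmin Q1c.
pose Q2 u := Sv u 0.
have Q2N u : Q2 u -> Q2 (- u).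
  by move=> Su; have := S_zmul (-1) Su; rewrite !mulN1r oppr0.
have gz : g%:Z != 0 by rewrite eqz_nat -lt0n.
have Q2nz : exists u, u != 0 /\ Q2 u.
  exists (u0 * u0 + u0 * g%:Z - k%:Z * g%:Z * g%:Z); split; last exact: S_norm.
  by apply/eqP => /hnsq [_ /eqP]; rewrite (negbTE gz).
have [h [h0 Sh hmin]] := min_exists Q2nz Q2N.
have Q2c x y t : Q2 x -> Q2 y -> Q2 (x + t * y).
  by move=> Sx Sy; have := S_add Sx (S_zmul t Sy); rewrite mulr0 addr0.
have hdiv := min_div h0 Sh hmin Q2c.
have : Q1 h%:Z by exists (0 * k%:Z); have := S_omega Sh; rewrite addr0.
move/gdiv; rewrite dvdzE /= => /dvdnP [a ha].
have a0 : (0 < a)%N by move: h0; rewrite ha muln_gt0 => /andP [].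
have : Q1 (u0 + g%:Z) by exists (g%:Z * k%:Z); exact: S_omega Su0.
move/gdiv/dvdzP => [c' hc'].
pose c := c' - 1.
have hu0 : u0 = c * g%:Z by rewrite /c mulrBl mul1r -hc' addrK.
have S7 := S_add (S_omega Su0) (S_zmul (- (c + 1)) Su0).
have e7 : u0 + g%:Z + - (c + 1) * g%:Z = 0 by rewrite hu0; ring.
rewrite e7 in S7.
have [t' ht'] := dvdzP (hdiv _ S7).
have hN : exists t : int, c * c + c - k%:Z = t * a%:Z.
  exists (- t'); apply: (mulIf gz).
  have -> : - t' * a%:Z * g%:Z = - (t' * h%:Z) by rewrite ha PoszM; ring.
  by rewrite -ht' hu0; ring.
exists g, a, c; split => //.
have hd0 := d0.
apply/seteqP; split => x.
  move=> Ax; have [u [v [-> Suv]]] := A_S Ax.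
  have Q1v : Q1 v by exists u.
  have [t ht] := dvdzP (gdiv _ Q1v).
  have S8 := S_add Suv (S_zmul (- t) Su0).
  have e8 : v + - t * g%:Z = 0 by rewrite ht; ring.
  rewrite e8 in S8.
  have [s hs] := dvdzP (hdiv _ S8).
  exists s, t; apply: qext; rewrite /lc /qadd /qscale /ew /=.
    have -> : u = s * h%:Z + t * u0 by rewrite -hs; ring.
    by rewrite ht hu0 ha PoszM !(intrD, intrM) /=; field.
  by rewrite ht intrM /=; field.
move=> [s [t ->]].
have S9 := S_add (S_zmul s Sh) (S_zmul t Su0).
rewrite mulr0 add0r in S9.
move: S9; rewrite /Sv; congr A.
apply: qext; rewrite /lc /qadd /qscale /ew /= ?ha ?hu0 ?PoszM !(intrD, intrM) /=.
  by field.
by field.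
Qed.
End Struct.

Lemma nsq_nat (D S V : nat) : squarefree D -> (1 < D)%N -> (0 < V)%N -> (S * S = D * (V * V))%N -> False.
Proof.
move=> hsq hD V0 e.
have S0 : (0 < S)%N by rewrite lt0n; apply/eqP => S0; move: e; rewrite S0 /=; nia.
set p := pdiv D.
have pp : prime p := pdiv_prime hD.
have D0 : (0 < D)%N by apply: ltnW.
have l1 : (0 < logn p D)%N by rewrite logn_gt0 mem_primes pp D0 pdiv_dvd.
have l2 : (logn p D < 2)%N.
  rewrite ltnNge -pfactor_dvdn //; apply/negP => h; apply: (hsq p pp).
  by move: h; rewrite expnS expn1.
have := congr1 (logn p) e.
rewrite lognM // lognM // ?muln_gt0 ?V0 // lognM //.
lia.
Qed.

Lemma nsq_int (D k : nat) : squarefree D -> (1 < D)%N -> D = (4 * k + 1)%N ->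
  forall u v : int, u * u + u * v - k%:Z * v * v = 0 -> u = 0 /\ v = 0.
Proof.
move=> hsq hD hDk u v e.
have e2 : (2 * u + v) * (2 * u + v) = D%:Z * (v * v).
  rewrite hDk PoszD PoszM; have h : u * u + u * v = k%:Z * v * v by apply/eqP; rewrite -subr_eq0 e.
  have -> : (2 * u + v) * (2 * u + v) = 4 * (u * u + u * v) + v * v by ring.
  by rewrite h; ring.
case: (eqVneq v 0) => [v0|v0].
  by move: e; rewrite v0 !mulr0 subr0 addr0 => /eqP; rewrite mulf_eq0 orbb => /eqP.
exfalso; apply: (@nsq_nat D (absz (2 * u + v)) (absz v) hsq hD); first by rewrite absz_gt0.
by have := congr1 absz e2; rewrite !abszM.
Qed.


Section Norm.
Variables (D k : nat).
Hypotheses (hDk : D = (4 * k + 1)%N).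
Variables (g d a : nat) (c t0 : int).
Hypotheses (hg : (0 < g)%N) (hd : (0 < d)%N) (ha : (0 < a)%N).
Hypothesis ht0 : c * c + c - k%:Z = t0 * a%:Z.
Let q : rat := g%:R / d%:R.
Let E1 := qscale q (a%:R, 0).
Let E2 := qscale q (c%:~R + 1/2, 1/2).
Variable A : set qf.
Hypothesis hA : A = lat E1 E2.

Lemma qn0 : q != 0.
Proof. by rewrite /q mulf_eq0 invr_eq0 !pnatr_eq0 negb_or -!lt0n hg hd. Qed.
Lemma a0 : (a%:R : rat) != 0.
Proof. by rewrite pnatr_eq0 -lt0n. Qed.

Lemma DRc : (D%:R : rat) = 4 * (c%:~R * c%:~R + c%:~R - t0%:~R * a%:R) + 1.
Proof.
have : (k%:R : rat) = c%:~R * c%:~R + c%:~R - t0%:~R * a%:R.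
  have hk : k%:Z = c * c + c - t0 * a%:Z by rewrite -ht0; ring.
  by rewrite pmulrn hk !(intrD, intrB, intrM, intrN) -?pmulrn.
by rewrite hDk natrD natrM => ->.
Qed.

Lemma N2 x z : A x -> A z -> OK D (qscale (q ^+ 2 * a%:R)^-1 (qmul D x (qconj z))).
Proof.
rewrite hA => -[i [j ->]] [i' [j' ->]].
exists (i * i' * a%:Z + (i * j' + j * i') * c + i * j' + j * j' * t0), (j * i' - i * j').
have hq := qn0; have ha0 := a0.
apply: qext; rewrite /qscale /qmul /qconj /lc /qadd /E1 /E2 /= ?DRc !(intrD, intrB, intrM) -?pmulrn.
  by field; rewrite hq ha0.
by field; rewrite hq ha0.
Qed.

Let O1 : qf := (1, 0).
Let O2 : qf := (c%:~R + 1/2, 1/2).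

Lemma OK_lat : OK D = lat O1 O2.
Proof.
apply/seteqP; split => x.
  move=> [u [v ->]]; exists (u - v * c), v.
  by apply: qext; rewrite /lc /qadd /qscale /O1 /O2 /= ?intrB ?intrM; field.
move=> [i [j ->]]; exists (i + j * c), j.
by apply: qext; rewrite /lc /qadd /qscale /O1 /O2 /= ?intrD ?intrM; field.
Qed.

Lemma detO : det2 O1 O2 != 0.
Proof. by rewrite /det2 /O1 /O2 /= mul0r subr0 mul1r. Qed.

Lemma detE : det2 E1 E2 != 0.
Proof.
rewrite /det2 /E1 /E2 /qscale /= mulr0 mul0r subr0.
by apply: mulf_neq0; apply: mulf_neq0; rewrite ?qn0 ?a0.
Qed.

Lemma grpI (M N : set qf) : grp M -> grp N -> grp (M `&` N).
Proof.
move=> [M0 Ms] [N0 Ns]; split; first by split.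
by move=> x y [Mx Nx] [My Ny]; split; [exact: Ms | exact: Ns].
Qed.

Lemma OK_grp : grp (OK D).
Proof. by rewrite OK_lat; exact: lat_grp. Qed.

Lemma A_grpN : grp A.
Proof. by rewrite hA; exact: lat_grp. Qed.

Definition OA := OK D `&` A.

Lemma OA_grp : grp OA.
Proof. exact: grpI OK_grp A_grpN. Qed.

Lemma M0eq : M0 E1 E2 (2 * d) (2 * d) = M0 O1 O2 (2 * g * a) (2 * g).
Proof.
have hd0 : (d%:R : rat) != 0 by rewrite pnatr_eq0 -lt0n.
rewrite /M0; congr lat; apply: qext; rewrite /qscale /E1 /E2 /q /O1 /O2 /= ?natrM.
- by field.
- by ring.
- by field.
- by field.
Qed.

Lemma M0_OA z : M0 O1 O2 (2 * g * a) (2 * g) z -> OA z.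
Proof.
move=> h; split; first by rewrite OK_lat; exact: M0_sub h.
by rewrite hA; apply: (@M0_sub _ _ (2 * d) (2 * d)); rewrite M0eq.
Qed.

Lemma ratio (X1 X2 Z n m : nat) : (n = X1 * Z)%N -> (m = X2 * Z)%N -> (0 < m)%N ->
  (X1%:R / X2%:R : rat) = n%:R / m%:R.
Proof.
move=> -> -> hm; rewrite !natrM.
have Z0 : (Z%:R : rat) != 0 by rewrite pnatr_eq0; apply/eqP => Z0; move: hm; rewrite Z0 muln0.
have X0 : (X2%:R : rat) != 0 by rewrite pnatr_eq0; apply/eqP => X0; move: hm; rewrite X0.
by field; rewrite Z0 X0.
Qed.

Lemma absnormE : absnorm D A = q ^+ 2 * a%:R.
Proof.
have h1 : (1 < 2 * g * a)%N by rewrite -mulnA (@leq_pmul2l 2 1) // muln_gt0 hg ha.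
have h2 : (1 < 2 * g)%N by rewrite (@leq_pmul2l 2 1).
have h3 : (1 < 2 * d)%N by rewrite (@leq_pmul2l 2 1).
have Ha := CF (D:=D) h1 h2 detO (s := (1, 0)) (L := OK D) (M := OA) (P := fun _ => True) OA_grp
  (fun z h => ltac:(by rewrite qmul1; exact: M0_OA h))
  (fun x h => ltac:(by exists x; split; [rewrite -OK_lat | rewrite qmul1 qsubxx; exact: OA_grp.1]))
  (H2_true OK_grp (fun z (h : OA z) => proj1 h)).
have Hb := CF (D:=D) h1 h2 detO (s := (1, 0)) (L := OA) (M := M0 O1 O2 (2 * g * a) (2 * g))
  (P := fun _ => True) (lat_grp _ _)
  (fun z h => ltac:(by rewrite qmul1))
  (fun x h => ltac:(by exists x; split; [rewrite -OK_lat; exact: proj1 h | rewrite qmul1 qsubxx; exact: (lat_grp _ _).1]))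
  (H2_true OA_grp M0_OA).
have Hc := CF (D:=D) h3 h3 detE (s := (1, 0)) (L := A) (M := OA) (P := fun _ => True) OA_grp
  (fun z h => ltac:(by rewrite qmul1; apply: M0_OA; rewrite -M0eq))
  (fun x h => ltac:(by exists x; split; [rewrite -hA | rewrite qmul1 qsubxx; exact: OA_grp.1]))
  (H2_true A_grpN (fun z (h : OA z) => proj2 h)).
have Hd := CF (D:=D) h3 h3 detE (s := (1, 0)) (L := OA) (M := M0 E1 E2 (2 * d) (2 * d))
  (P := fun _ => True) (lat_grp _ _)
  (fun z h => ltac:(by rewrite qmul1))
  (fun x h => ltac:(by exists x; split; [rewrite -hA; exact: proj2 h | rewrite qmul1 qsubxx; exact: (lat_grp _ _).1]))
  (H2_true OA_grp (fun z (h : M0 E1 E2 (2 * d) (2 * d) z) => ltac:(by apply: M0_OA; rewrite -M0eq))).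
rewrite K0_card ?detO // muln1 in Hb; rewrite K0_card ?detE // muln1 M0eq in Hd.
have hT1 : Sset (fun f => qmul D (1, 0) (phiL O1 O2 (n1 := 2 * g * a) (n2 := 2 * g) f)) (OK D) (fun _ => True) = [set: 'Z_(2 * g * a) * 'Z_(2 * g)]%SET.
  apply/setP => f; rewrite !inE qmul1; apply/asboolP; split => //.
  by rewrite OK_lat; exact: phiL_lat.
have hT2 : Sset (fun f => qmul D (1, 0) (phiL E1 E2 (n1 := 2 * d) (n2 := 2 * d) f)) A (fun _ => True) = [set: 'Z_(2 * d) * 'Z_(2 * d)]%SET.
  apply/setP => f; rewrite !inE qmul1; apply/asboolP; split => //.
  by rewrite hA; exact: phiL_lat.
have hK1 : [set f | `[< OA (qmul D (1, 0) (phiL O1 O2 (n1 := 2 * g * a) (n2 := 2 * g) f)) >]]%SET =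
   Sset (fun f => qmul D (1, 0) (phiL O1 O2 (n1 := 2 * g * a) (n2 := 2 * g) f)) OA (fun _ => True).
  by apply/setP => f; rewrite !inE; apply/asboolP/asboolP => [h|[h _]].
have hK2 : [set f | `[< OA (qmul D (1, 0) (phiL E1 E2 (n1 := 2 * d) (n2 := 2 * d) f)) >]]%SET =
   Sset (fun f => qmul D (1, 0) (phiL E1 E2 (n1 := 2 * d) (n2 := 2 * d) f)) OA (fun _ => True).
  by apply/setP => f; rewrite !inE; apply/asboolP/asboolP => [h|[h _]].
rewrite hT1 hK1 Hb cardsT cardZ2 // in Ha.
rewrite hT2 hK2 Hd cardsT cardZ2 // in Hc.
rewrite /absnorm /lindex; rewrite /OA in Ha Hc.
rewrite (ratio Ha Hc); last by rewrite !muln_gt0 hd.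
have hd0 : (d%:R : rat) != 0 by rewrite pnatr_eq0 -lt0n.
by rewrite /q !natrM; field.
Qed.
End Norm.

End Aux.
Import Aux.

Theorem mainTheorem1 (D : nat) (hD1 : (1 < D)%N) (hD4 : (D %% 4 = 1)%N)
  (hDsq : squarefree D) (b : nat) (hb : (0 < b)%N) (A : set qf)
  (hA : is_frac_ideal D A) (m : int) :
  ((Gb D b A m)%:R : rat) = (Nb D (b * D) A m)%:R / D%:R.
Proof.
pose k := (D %/ 4)%N.
have hDk : D = (4 * k + 1)%N by rewrite {1}(divn_eq D 4) hD4 mulnC.
have hnsq := @nsq_int D k hDsq hD1 hDk.
case: hA => A0 Aadd Amod Anz [d [hd Ad]].
have [g [a [c [g0 a0 [t0 ht0] hAl]]]] := structure hDk hnsq hd Aadd Amod Anz Ad.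
have hN := absnormE D g0 hd a0 hAl.
pose q : rat := g%:R / d%:R.
have hq : q != 0 by rewrite /q mulf_eq0 invr_eq0 !pnatr_eq0 negb_or -!lt0n g0 hd.
have ha0 : (a%:R : rat) != 0 by rewrite pnatr_eq0 -lt0n.
have hNA0 : q ^+ 2 * a%:R != 0 by rewrite mulf_neq0 // expf_neq0.
have hdet := detE c g0 hd a0.
have hMC := main_count hDk hD1 hAl hdet Amod (N2 hDk g0 hd a0 ht0 hAl) hNA0 m hb.
have eG : Gb D b A m = count_mod (mulset D (0, D%:R^-1) A) (iscale b A) (Pg D (q ^+ 2 * a%:R) b m).
  by rewrite /Gb hN (Aq_eq hDk hD1 hAl Amod).
have eN : Nb D (b * D) A m = count_mod A (iscale (b * D) A) (Pn D (q ^+ 2 * a%:R) b m).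
  by rewrite /Nb hN.
rewrite eG eN -hMC natrM.
have hD0 : (D%:R : rat) != 0 by rewrite pnatr_eq0 -lt0n ltnW.
by field.
Qed.
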